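(* Let $2\le k\le d$, suppose dimension $k$ is just rotating (after some step $N\le i$), and let $a=\lambda x^{(i)}_{k-1}$ and $b=x^{(i)}_k$. Suppose that $\theta_g\le\pi/2$, $\gamma(i)>\pi/2$ and $|a+b|>|a|$. Then $\langle\lambda[a+b],[\lambda b]\rangle\le\pi/2$, entailing $\gamma(i+1)\le\phi(i+1)\le\pi/2$.
   Context: Fix an integer $R\ge2$ and $\theta_g=\pi/R$. Polar rounding on $\mathbb{C}$: for $z=Ae^{i\theta}$, $[z]=[A]e^{i[\theta]}$, where $[A]$ is a fixed real rounding function of the modulus and $[\theta]$ is the multiple of $\theta_g$ closest to $\theta$ (deterministic tie-breaking). Let $\lambda\in\mathbb{C}$ be algebraic with $|\lambda|=1$ and $M$ the $d\times d$ Jordan block with eigenvalue $\lambda$. The orbit is $x^{(0)}\in\mathbb{C}^d$ with rounded entries and $x^{(i+1)}_j=[\lambda x^{(i)}_j+x^{(i)}_{j+1}]$ for $j<d$, $x^{(i+1)}_d=[\lambda x^{(i)}_d]$. Dimension $k$ is just rotating after position $N$ if $x^{(i+1)}_k=[\lambda x^{(i)}_k]$ for all $i\ge N$. For $a,b\in\mathbb{C}$ (as vectors in $\mathbb{R}^2$), $\langle a,b\rangle\in[0,\pi]$ is the smallest angle between them. Define $\phi(i)=\langle\lambda x^{(i)}_{k-1},x^{(i)}_k\rangle$ and $\gamma(i)=\langle\lambda x^{(i)}_{k-1}+x^{(i)}_k,\lambda x^{(i)}_{k-1}\rangle$. *)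

(* Defs.v *)
From Stdlib Require Import Reals ZArith.
From Coquelicot Require Import Coquelicot.
Open Scope R_scope.

Definition theta_g (Rg : nat) : R := PI / INR Rg.

Definition cexpi (t : R) : C := (cos t, sin t).

(* <a,b> : smallest angle in [0,pi] between a and b viewed as vectors of R^2.
   Convention (degenerate case, not covered by the paper): if a or b is 0,
   the angle is pi/2. *)
Definition cangle (a b : C) : R :=
  if Req_EM_T (Cmod a * Cmod b) 0 then PI / 2
  else acos ((fst a * fst b + snd a * snd b) / (Cmod a * Cmod b)).

(* rnd is a polar rounding with modulus rounding rndA and grid angle thg:
   for z = A e^{i theta}, rnd z = [A] e^{i [theta]} where [theta] = m * thg is
   a multiple of thg closest to theta (ties broken in some fixed way). *)
Definition is_polar_rounding (thg : R) (rndA : R -> R) (rnd : C -> C) : Prop :=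
  forall z : C, exists (th : R) (m : Z),
    z = Cmult (RtoC (Cmod z)) (cexpi th) /\
    (forall m' : Z, Rabs (th - IZR m * thg) <= Rabs (th - IZR m' * thg)) /\
    rnd z = Cmult (RtoC (rndA (Cmod z))) (cexpi (IZR m * thg)).

Fixpoint cpow (z : C) (n : nat) : C :=
  match n with O => RtoC 1 | S n => Cmult z (cpow z n) end.

Definition is_algebraic (lam : C) : Prop :=
  exists (n : nat) (c : nat -> Z),
    (exists j, (j <= n)%nat /\ c j <> 0%Z) /\
    sum_n (fun j => Cmult (RtoC (IZR (c j))) (cpow lam j)) n = RtoC 0.

(* x i j = x^{(i)}_j (coordinates indexed 1..d): rounded orbit of the
   d x d Jordan block with eigenvalue lam *)
Definition jordan_orbit (rnd : C -> C) (lam : C) (d : nat) (x : nat -> nat -> C) : Prop :=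
  (forall j, (1 <= j <= d)%nat -> exists z, x O j = rnd z) /\
  (forall i j, (1 <= j)%nat -> (j < d)%nat ->
     x (S i) j = rnd (Cplus (Cmult lam (x i j)) (x i (S j)))) /\
  (forall i, x (S i) d = rnd (Cmult lam (x i d))).

Definition just_rotating (rnd : C -> C) (lam : C) (x : nat -> nat -> C) (k N : nat) : Prop :=
  forall i, (N <= i)%nat -> x (S i) k = rnd (Cmult lam (x i k)).

Definition phi_ang (lam : C) (x : nat -> nat -> C) (k i : nat) : R :=
  cangle (Cmult lam (x i (k - 1)%nat)) (x i k).

Definition gamma_ang (lam : C) (x : nat -> nat -> C) (k i : nat) : R :=
  cangle (Cplus (Cmult lam (x i (k - 1)%nat)) (x i k)) (Cmult lam (x i (k - 1)%nat)).

(* Main.v *)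
Require Import Defs.
From Stdlib Require Import Reals ZArith Lra Lia Psatz.
From Coquelicot Require Import Coquelicot.
Open Scope R_scope.

Lemma sin_2kpi (k : Z) : sin (IZR k * (2 * PI)) = 0.
Proof. apply sin_eq_0_1. exists (2 * k)%Z. rewrite mult_IZR. ring. Qed.

Lemma cos_2kpi (k : Z) : cos (IZR k * (2 * PI)) = 1.
Proof.
  replace (IZR k * (2 * PI)) with (2 * (IZR k * PI)) by ring.
  rewrite cos_2a_sin. rewrite sin_eq_0_1; [ring|]. now exists k.
Qed.

Lemma cos_per (x : R) (k : Z) : cos (x + IZR k * (2 * PI)) = cos x.
Proof. rewrite cos_plus, cos_2kpi, sin_2kpi. ring. Qed.
Lemma sin_per (x : R) (k : Z) : sin (x + IZR k * (2 * PI)) = sin x.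
Proof. rewrite sin_plus, cos_2kpi, sin_2kpi. ring. Qed.

Lemma cs_eq (x y : R) : cos x = cos y -> sin x = sin y ->
  exists k : Z, x = y + IZR k * (2 * PI).
Proof.
  intros Hc Hs.
  assert (H1 : cos (x - y) = 1).
  { rewrite cos_minus, Hc, Hs. pose proof (sin2_cos2 y). unfold Rsqr in *. lra. }
  assert (H2 : sin ((x - y) / 2) = 0).
  { replace (x - y) with (2 * ((x - y) / 2)) in H1 by field.
    rewrite cos_2a_sin in H1. nra. }
  destruct (sin_eq_0_0 _ H2) as [k Hk]. exists k.
  replace x with (y + 2 * ((x - y)/2)) by field. rewrite Hk. ring.
Qed.

Lemma acos_anti (x y : R) : x <= y -> acos y <= acos x.
Proof.
  intros Hxy.
  destruct (Rle_dec 1 y) as [Hy|Hy].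
  { unfold acos at 1. destruct (Rle_dec y (-1)); [lra|].
    destruct (Rle_dec 1 y); [|lra]. apply acos_bound. }
  destruct (Rle_dec x (-1)) as [Hx|Hx].
  { unfold acos at 2. destruct (Rle_dec x (-1)); [|lra]. apply acos_bound. }
  destruct (Rle_lt_dec (acos y) (acos x)) as [H|H]; auto.
  exfalso.
  pose proof (acos_bound x). pose proof (acos_bound y).
  pose proof (cos_decreasing_1 (acos x) (acos y)) as Hd.
  rewrite !cos_acos in Hd by lra. 
  assert (y < x) by (apply Hd; lra). lra.
Qed.

Lemma acos_le_half (x : R) : 0 <= x -> acos x <= PI / 2.
Proof. intros. rewrite <- acos_0. now apply acos_anti. Qed.

Definition dot (a b : C) := fst a * fst b + snd a * snd b.

Lemma Cmod_nn (a : C) : 0 <= Cmod a.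
Proof. unfold Cmod. apply sqrt_pos. Qed.

Lemma Cmod_sq (a : C) : Cmod a * Cmod a = fst a * fst a + snd a * snd a.
Proof. unfold Cmod. rewrite sqrt_sqrt by nra. ring. Qed.

Lemma cangle_le_half (a b : C) : 0 <= dot a b -> cangle a b <= PI / 2.
Proof.
  intros H. unfold cangle. destruct (Req_EM_T _ _) as [E|E]; [lra|].
  apply acos_le_half. unfold dot in H.
  pose proof (Cmod_nn a). pose proof (Cmod_nn b).
  apply Rdiv_le_0_compat; [lra|]. destruct (Rle_lt_or_eq _ _ (Rmult_le_pos _ _ H0 H1)); auto.
  exfalso; auto.
Qed.

Lemma cangle_gt_half (a b : C) : cangle a b > PI / 2 -> dot a b < 0.
Proof. intros H. destruct (Rlt_le_dec (dot a b) 0); auto. apply cangle_le_half in r. lra. Qed.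

Lemma gamma_phi (A B : C) : 0 <= dot A B -> cangle (Cplus A B) A <= cangle A B.
Proof.
  intros Hc.
  destruct A as [a1 a2], B as [b1 b2]. unfold dot in Hc; simpl in Hc.
  pose proof (Cmod_sq (a1,a2)) as SA. pose proof (Cmod_sq (b1,b2)) as SB.
  pose proof (Cmod_sq (Cplus (a1,a2) (b1,b2))) as SAB. simpl in SA, SB, SAB.
  pose proof (Cmod_nn (a1,a2)). pose proof (Cmod_nn (b1,b2)). pose proof (Cmod_nn (Cplus (a1,a2) (b1,b2))).
  set (mA := Cmod (a1,a2)) in *. set (mB := Cmod (b1,b2)) in *. set (mAB := Cmod (Cplus (a1,a2) (b1,b2))) in *.
  unfold cangle. fold mA mB mAB.
  destruct (Req_EM_T (mA * mB) 0) as [E1|E1].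
  - destruct (Req_EM_T (mAB * mA) 0) as [E2|E2]; [lra|].
    assert (mA <> 0) by (intro; apply E2; subst; rewrite H2; ring).
    apply acos_le_half. simpl. apply Rdiv_le_0_compat; [nra|].
    assert (0 < mAB) by (destruct (Rle_lt_or_eq _ _ H1) as [Q|Q]; auto; exfalso; apply E2; rewrite <- Q; ring).
    assert (0 < mA) by lra. nra.
  - assert (0 < mA) by (destruct (Rle_lt_or_eq _ _ H) as [Q|Q]; auto; exfalso; apply E1; rewrite <- Q; ring).
    assert (0 < mB) by (destruct (Rle_lt_or_eq _ _ H0) as [Q|Q]; auto; exfalso; apply E1; rewrite <- Q; ring).
    assert (0 < mAB).
    { destruct (Rle_lt_or_eq _ _ H1) as [Q|Q]; auto. exfalso. rewrite <- Q in SAB. nra. }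
    destruct (Req_EM_T (mAB * mA) 0) as [E2|E2]; [nra|].
    apply acos_anti. simpl.
    set (c := a1 * b1 + a2 * b2) in *.
    assert (Key : c * mAB <= (mA * mA + c) * mB).
    { apply Rsqr_incr_0_var; [|nra]. unfold Rsqr.
      replace (c * mAB * (c * mAB)) with (c * c * (mAB * mAB)) by ring.
      replace ((mA * mA + c) * mB * ((mA * mA + c) * mB)) with ((mA * mA + c) * (mA * mA + c) * (mB * mB)) by ring.
      rewrite SAB, SA, SB. unfold c.
      assert (HCS : (a1 * b1 + a2 * b2) * (a1 * b1 + a2 * b2) <= (a1*a1+a2*a2)*(b1*b1+b2*b2)) by (pose proof (pow2_ge_0 (a1*b2-a2*b1)); nra).
      assert (HnA : 0 <= a1*a1+a2*a2) by nra.
      pose proof (Rmult_le_compat_l _ _ _ HnA HCS).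
      pose proof (Rmult_le_compat_l _ _ _ Hc HCS).
      unfold c in *. nra. }
    replace ((a1 + b1) * a1 + (a2 + b2) * a2) with (mA * mA + c) by (rewrite SA; unfold c; ring).
    apply (Rmult_le_reg_r (mA * mB * mAB)); [nra|].
    replace (c / (mA * mB) * (mA * mB * mAB)) with (c * mAB) by (field; lra).
    replace ((mA * mA + c) / (mAB * mA) * (mA * mB * mAB)) with ((mA * mA + c) * mB) by (field; lra).
    exact Key.
Qed.

Lemma twopi_thg (Rg : nat) (k : Z) : (1 <= Rg)%nat ->
  IZR k * (2 * PI) = IZR (2 * Z.of_nat Rg * k) * theta_g Rg.
Proof.
  intros HR. unfold theta_g. rewrite !mult_IZR, <- INR_IZR_INZ.
  assert (0 < INR Rg) by (apply lt_0_INR; lia). field. lra.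
Qed.

Lemma Cmod_polar (r t : R) : 0 <= r -> Cmod (Cmult (RtoC r) (cexpi t)) = r.
Proof.
  intros Hr. unfold Cmod, cexpi, RtoC; simpl.
  replace ((r * cos t - 0 * sin t) * ((r * cos t - 0 * sin t) * 1) +
           (r * sin t + 0 * cos t) * ((r * sin t + 0 * cos t) * 1)) with (r * r * ((sin t)² + (cos t)²)) by (unfold Rsqr; ring).
  rewrite sin2_cos2, Rmult_1_r. now apply sqrt_square.
Qed.

Lemma cexpi_per (x : R) (k : Z) : cexpi (x + IZR k * (2 * PI)) = cexpi x.
Proof. unfold cexpi. now rewrite cos_per, sin_per. Qed.

Lemma round_polar (Rg : nat) (rndA : R -> R) (rnd : C -> C) (r t : R) :
  (1 <= Rg)%nat -> is_polar_rounding (theta_g Rg) rndA rnd -> 0 < r ->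
  exists j : Z, (forall m : Z, Rabs (t - IZR j * theta_g Rg) <= Rabs (t - IZR m * theta_g Rg)) /\
    rnd (Cmult (RtoC r) (cexpi t)) = Cmult (RtoC (rndA r)) (cexpi (IZR j * theta_g Rg)).
Proof.
  intros HR Hp Hr.
  destruct (Hp (Cmult (RtoC r) (cexpi t))) as [th [m [Hz [Hmin Hrn]]]].
  rewrite Cmod_polar in Hz, Hrn by lra.
  assert (Hc : cos th = cos t /\ sin th = sin t).
  { unfold cexpi, RtoC, Cmult in Hz; simpl in Hz. injection Hz as E1 E2.
    split; apply (Rmult_eq_reg_l r); lra. }
  destruct Hc as [Hc Hs]. destruct (cs_eq _ _ Hc Hs) as [k Hk].
  rewrite twopi_thg with (Rg := Rg) in Hk by exact HR.
  set (K := (2 * Z.of_nat Rg * k)%Z) in *.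
  exists (m - K)%Z. split.
  - intros m'. specialize (Hmin (m' + K)%Z). rewrite Hk in Hmin. rewrite !plus_IZR, !minus_IZR in *.
    replace (t - (IZR m - IZR K) * theta_g Rg) with (t + IZR K * theta_g Rg - IZR m * theta_g Rg) by ring.
    replace (t - IZR m' * theta_g Rg) with (t + IZR K * theta_g Rg - (IZR m' + IZR K) * theta_g Rg) by ring.
    exact Hmin.
  - rewrite Hrn. f_equal.
    replace (IZR m * theta_g Rg) with (IZR (m - K) * theta_g Rg + IZR k * (2 * PI)).
    + apply cexpi_per.
    + rewrite twopi_thg with (Rg := Rg) by exact HR. fold K. rewrite minus_IZR. ring.
Qed.

Lemma near_grid (th t : R) : 0 < th -> exists m : Z, Rabs (t - IZR m * th) <= th / 2.
Proof.
  intros Hth. destruct (archimed (t / th + / 2)) as [A B].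
  exists (up (t / th + / 2) - 1)%Z. rewrite minus_IZR.
  set (u := IZR (up (t / th + / 2))) in *.
  assert (E : t - (u - 1) * th = th * (t/th + /2 - u) + th / 2) by (field; lra).
  rewrite E. apply Rabs_le.
  assert (0 <= th * (u - (t/th + /2))) by (apply Rmult_le_pos; lra).
  assert (th * (u - (t/th + /2)) <= th) by (pose proof (Rmult_le_compat_l th _ 1 (Rlt_le _ _ Hth) B); lra).
  split; nra.
Qed.

Lemma main_dot (Rg : nat) (rndA : R -> R) (rnd : C -> C) (phi q a1 a2 beta : R) (m2 : Z) :
  (2 <= Rg)%nat ->
  (forall A : R, 0 <= A -> 0 <= rndA A) ->
  is_polar_rounding (theta_g Rg) rndA rnd ->
  0 <= q -> beta = IZR m2 * theta_g Rg ->
  let a := (a1, a2) in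
  let b := Cmult (RtoC q) (cexpi beta) in
  dot (Cplus a b) a < 0 ->
  Cmod (Cplus a b) > Cmod a ->
  0 <= dot (Cmult (cexpi phi) (rnd (Cplus a b))) (rnd (Cmult (cexpi phi) b)).
Proof.
  intros HR HrA Hp Hq Hbeta a b Hd Hm.
  assert (HR1 : (1 <= Rg)%nat) by lia.
  assert (HINR : 2 <= INR Rg) by (replace 2 with (INR 2) by (simpl; ring); apply le_INR; lia).
  assert (Hthg : 0 < theta_g Rg) by (unfold theta_g; apply Rdiv_lt_0_compat; [apply PI_RGT_0| lra]).
  set (thg := theta_g Rg) in *.
  set (cb := cos beta). set (sb := sin beta).
  assert (Hcs : cb * cb + sb * sb = 1) by (pose proof (sin2_cos2 beta); unfold cb, sb, Rsqr in *; lra).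
  set (u1 := a1 * cb + a2 * sb). set (u2 := - a1 * sb + a2 * cb).
  assert (Ea1 : a1 = u1 * cb - u2 * sb) by (replace (u1*cb - u2*sb) with (a1*(cb*cb+sb*sb)) by (unfold u1, u2; ring); rewrite Hcs; ring).
  assert (Ea2 : a2 = u1 * sb + u2 * cb) by (replace (u1*sb + u2*cb) with (a2*(cb*cb+sb*sb)) by (unfold u1, u2; ring); rewrite Hcs; ring).
  assert (N1 : u1*u1+u2*u2 = a1*a1+a2*a2).
  { replace (u1*u1+u2*u2) with ((a1*a1+a2*a2)*(cb*cb+sb*sb)) by (unfold u1, u2; ring). rewrite Hcs; ring. }
  assert (Hd' : u1 * u1 + u2 * u2 + q * u1 < 0).
  { unfold dot, a, b, cexpi, RtoC, Cmult, Cplus in Hd; simpl in Hd. fold cb sb in Hd.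
    rewrite N1. unfold u1. lra. }
  assert (Hm' : 2 * q * u1 + q * q > 0).
  { pose proof (Cmod_sq (Cplus a b)) as S1. pose proof (Cmod_sq a) as S2.
    pose proof (Cmod_nn a).
    assert (Cmod (Cplus a b) * Cmod (Cplus a b) > Cmod a * Cmod a) by nra.
    rewrite S1, S2 in H0. unfold a, b, cexpi, RtoC, Cmult, Cplus in H0; simpl in H0. fold cb sb in H0.
    unfold u1. assert (q * q * (cb * cb + sb * sb) = q * q) by (rewrite Hcs; ring). nra. }
  assert (Hqp : 0 < q) by (destruct (Rle_lt_or_eq _ _ Hq) as [Q|Q]; auto; subst q; nra).
  set (w1 := u1 + q).
  assert (Hu1 : u1 < 0) by nra.
  assert (Hw1 : 0 < w1) by (unfold w1; nra).
  assert (Hu2 : u2 * u2 < w1 * w1) by (unfold w1 in *; nra).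
  set (y := u2 / w1).
  assert (Hy : -1 < y < 1).
  { unfold y. split.
    - apply (Rmult_lt_reg_r w1); auto. field_simplify; try lra. nra.
    - apply (Rmult_lt_reg_r w1); auto. field_simplify; try lra. nra. }
  set (delta := atan y).
  assert (Hdel : - (PI / 4) < delta < PI / 4).
  { unfold delta. rewrite <- atan_1. rewrite <- atan_opp. split; apply atan_increasing; lra. }
  set (s := sqrt (w1 * w1 + u2 * u2)).
  assert (Hs : 0 < s) by (unfold s; apply sqrt_lt_R0; nra).
  assert (Hsq : sqrt (1 + y²) = s / w1).
  { rewrite <- (sqrt_Rsqr (s / w1)) by (apply Rdiv_le_0_compat; lra).
    f_equal. unfold Rsqr, y. 
    replace (s / w1 * (s / w1)) with ((s * s) / (w1 * w1)) by (field; lra).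
    unfold s. rewrite sqrt_sqrt by nra. field. lra. }
  assert (Hcd : s * cos delta = w1).
  { unfold delta. rewrite cos_atan, Hsq. field. lra. }
  assert (Hsd : s * sin delta = u2).
  { unfold delta. rewrite sin_atan, Hsq. unfold y. field. lra. }
  assert (Hab : Cplus a b = Cmult (RtoC s) (cexpi (beta + delta))).
  { unfold a, b, cexpi, RtoC, Cmult, Cplus; simpl. rewrite cos_plus, sin_plus. fold cb sb.
    f_equal.
    - replace (s * (cb * cos delta - sb * sin delta) - 0 * (sb * cos delta + cb * sin delta))
        with (cb * (s * cos delta) - sb * (s * sin delta)) by ring.
      rewrite Hcd, Hsd. unfold w1. rewrite Ea1. ring.
    - replace (s * (sb * cos delta + cb * sin delta) + 0 * (cb * cos delta - sb * sin delta))
        with (sb * (s * cos delta) + cb * (s * sin delta)) by ring.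
      rewrite Hcd, Hsd. unfold w1. rewrite Ea2. ring. }
  assert (Hlb : Cmult (cexpi phi) b = Cmult (RtoC q) (cexpi (phi + beta))).
  { unfold b, cexpi, RtoC, Cmult; simpl. rewrite cos_plus, sin_plus. f_equal; ring. }
  destruct (round_polar Rg rndA rnd s (beta + delta) HR1 Hp Hs) as [j1 [Hmin1 Hr1]].
  destruct (round_polar Rg rndA rnd q (phi + beta) HR1 Hp Hqp) as [j2 [Hmin2 Hr2]].
  fold thg in Hmin1, Hr1, Hmin2, Hr2.
  rewrite Hab, Hr1, Hlb, Hr2.
  set (J := (j1 - m2)%Z).
  assert (HJ : Rabs (IZR J * thg) < PI / 2).
  { specialize (Hmin1 m2). rewrite <- Hbeta in Hmin1.
    replace (beta + delta - IZR j1 * thg) with (delta - IZR J * thg) in Hmin1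
      by (unfold J; rewrite minus_IZR; rewrite Hbeta; ring).
    replace (beta + delta - beta) with delta in Hmin1 by ring.
    revert Hmin1. unfold Rabs. repeat destruct Rcase_abs; intros; lra. }
  assert (HJ2 : Rabs (IZR J) * thg <= PI / 2 - thg / 2).
  { rewrite Rabs_mult, (Rabs_right thg) in HJ by lra.
    unfold thg, theta_g in HJ |- *.
    assert (HJ3 : 2 * Rabs (IZR J) < INR Rg).
    { apply (Rmult_lt_reg_r (PI / INR Rg)). apply Rdiv_lt_0_compat; [apply PI_RGT_0|lra].
      replace (INR Rg * (PI / INR Rg)) with PI by (field; lra). pose proof PI_RGT_0. lra. }
    rewrite <- abs_IZR, INR_IZR_INZ in HJ3.
    assert (HZ : (2 * Z.abs J + 1 <= Z.of_nat Rg)%Z).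
    { assert (IZR (2 * Z.abs J) < IZR (Z.of_nat Rg)) by (rewrite mult_IZR; lra).
      apply lt_IZR in H. lia. }
    apply IZR_le in HZ. rewrite plus_IZR, mult_IZR, <- INR_IZR_INZ, abs_IZR in HZ.
    apply (Rmult_le_reg_r (INR Rg / PI)). apply Rdiv_lt_0_compat; [lra|apply PI_RGT_0].
    replace (Rabs (IZR J) * (PI / INR Rg) * (INR Rg / PI)) with (Rabs (IZR J))
      by (pose proof PI_RGT_0; field; lra).
    replace ((PI / 2 - PI / INR Rg / 2) * (INR Rg / PI)) with ((INR Rg - 1) / 2)
      by (pose proof PI_RGT_0; field; lra).
    lra. }
  destruct (near_grid thg phi Hthg) as [m Hm0].
  assert (He2 : Rabs (phi + beta - IZR j2 * thg) <= thg / 2).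
  { specialize (Hmin2 (m + m2)%Z). rewrite plus_IZR in Hmin2.
    replace (phi + beta - (IZR m + IZR m2) * thg) with (phi - IZR m * thg) in Hmin2 by (rewrite Hbeta; ring).
    lra. }
  assert (Harg : Rabs (phi + IZR j1 * thg - IZR j2 * thg) <= PI / 2).
  { replace (phi + IZR j1 * thg - IZR j2 * thg) with ((phi + beta - IZR j2 * thg) + IZR J * thg)
      by (unfold J; rewrite minus_IZR, Hbeta; ring).
    eapply Rle_trans; [apply Rabs_triang|].
    rewrite Rabs_mult, (Rabs_right thg) by lra. lra. }
  assert (Hcos : 0 <= cos (phi + IZR j1 * thg - IZR j2 * thg)).
  { revert Harg. unfold Rabs. destruct Rcase_abs; intros; apply cos_ge_0; lra. }
  pose proof (HrA s (Rlt_le _ _ Hs)). pose proof (HrA q Hq).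
  unfold dot, cexpi, RtoC, Cmult; simpl.
  replace (phi + IZR j1 * thg - IZR j2 * thg) with ((phi + IZR j1 * thg) - IZR j2 * thg) in Hcos by ring.
  rewrite cos_minus, cos_plus, sin_plus in Hcos.
  match goal with |- 0 <= ?e => replace e with (rndA s * rndA q * ((cos phi * cos (IZR j1 * thg) - sin phi * sin (IZR j1 * thg)) * cos (IZR j2 * thg) + (sin phi * cos (IZR j1 * thg) + cos phi * sin (IZR j1 * thg)) * sin (IZR j2 * thg))) by ring end.
  apply Rmult_le_pos; [apply Rmult_le_pos|]; lra.
Qed.

Theorem lemma15 (Rg : nat) (rndA : R -> R) (rnd : C -> C) (lam : C)
  (d k N i : nat) (x : nat -> nat -> C) :
  (2 <= Rg)%nat ->
  (forall A : R, 0 <= A -> 0 <= rndA A) ->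
  is_polar_rounding (theta_g Rg) rndA rnd ->
  is_algebraic lam -> Cmod lam = 1 ->
  jordan_orbit rnd lam d x ->
  (2 <= k <= d)%nat ->
  just_rotating rnd lam x k N -> (N <= i)%nat ->
  theta_g Rg <= PI / 2 ->
  gamma_ang lam x k i > PI / 2 ->
  Cmod (Cplus (Cmult lam (x i (k - 1)%nat)) (x i k)) > Cmod (Cmult lam (x i (k - 1)%nat)) ->
  cangle (Cmult lam (rnd (Cplus (Cmult lam (x i (k - 1)%nat)) (x i k))))
         (rnd (Cmult lam (x i k))) <= PI / 2 /\
  gamma_ang lam x k (S i) <= phi_ang lam x k (S i) /\
  phi_ang lam x k (S i) <= PI / 2.
Proof.
  intros HR HrA Hp _ Hl Horb Hk Hjr HNi _ Hg Hmod.
  destruct Horb as [Ho0 [Ho1 Ho2]].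
  destruct (Hp lam) as [phi [m0 [Hz _]]]. rewrite Hl in Hz.
  assert (Hlam : lam = cexpi phi).
  { rewrite Hz. unfold cexpi, RtoC, Cmult; simpl. f_equal; ring. }
  clear Hz. subst lam.
  assert (Hb : exists z, x i k = rnd z).
  { destruct i as [|i'].
    - apply Ho0. lia.
    - destruct (Nat.lt_ge_cases k d).
      + exists (Cplus (Cmult (cexpi phi) (x i' k)) (x i' (S k))). apply Ho1; lia.
      + replace k with d by lia. exists (Cmult (cexpi phi) (x i' d)). apply Ho2. }
  destruct Hb as [z0 Hz0].
  destruct (Hp z0) as [_ [m2 [_ [_ Hr0]]]].
  rewrite Hr0 in Hz0.
  assert (Hx1 : x (S i) (k - 1)%nat = rnd (Cplus (Cmult (cexpi phi) (x i (k - 1)%nat)) (x i k))).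
  { replace k with (S (k - 1)) at 3 by lia. apply Ho1; lia. }
  assert (Hx2 : x (S i) k = rnd (Cmult (cexpi phi) (x i k))) by (apply Hjr; lia).
  unfold gamma_ang, phi_ang. rewrite Hx1, Hx2.
  unfold gamma_ang in Hg.
  rewrite Hz0 in Hg, Hmod |- *.
  remember (Cmult (cexpi phi) (x i (k - 1)%nat)) as A eqn:HA. destruct A as [a1 a2].
  pose proof (main_dot Rg rndA rnd phi (rndA (Cmod z0)) a1 a2 (IZR m2 * theta_g Rg) m2 HR HrA Hp
     (HrA _ (Cmod_nn z0)) eq_refl) as MD.
  cbv zeta in MD.
  assert (Hdot := MD (cangle_gt_half _ _ Hg) Hmod).
  split; [apply cangle_le_half; exact Hdot|].
  split; [apply gamma_phi; exact Hdot|apply cangle_le_half; exact Hdot].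
Qed.
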